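(* Let $G$ be a Chevalley group with BN-pair data $B=UT_0$, $W_0$ as in the context. Let $\chi$ be a complex character of $G$ with $\chi(u)=0$ for every $p$-element $u\neq 1$ of $G$, and let $\beta\in\mathrm{Irr}\,T_0$ be an irreducible constituent of the truncation $\overline{\chi}_{B/U}$ (viewed as a character of $B/U\cong T_0$). Then $c_\chi:=\chi(1)/|G|_p\ge |W_0\beta|$. Moreover, if $\chi(1)=|G|_p$ then $\overline{\chi}_{B/U}$ is irreducible and $W_0$-invariant.
   Context: $G=\mathbf G^{Fr}$ is a finite group of fixed points of a Frobenius endomorphism on a simple simply connected algebraic group over an algebraically closed field of characteristic $p$. $G$ has a split BN-pair: $B$ a Borel subgroup, $U=O_p(B)$ a Sylow $p$-subgroup of $G$, $T_0=B\cap N$ a maximal torus with $B=UT_0$, $W_0=N/T_0$ the Weyl group of the BN-pair acting on $\mathrm{Irr}\,T_0$ by conjugation. For $H\le G$ with $K\trianglelefteq H$ and a class function $\eta$ on $G$, the truncation (Harish-Chandra restriction) $\overline{\eta}_{H/K}$ is the class function on $H/K$ given by $hK\mapsto\frac{1}{|K|}\sum_{k\in K}\eta(hk)$. *)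

(* Defs.v *)
From HB Require Import structures.
From mathcomp Require Import all_boot all_order all_algebra all_fingroup
  all_solvable all_field all_character.
Set Implicit Arguments.
Unset Strict Implicit.
Unset Printing Implicit Defensive.
Import GroupScope GRing.Theory Num.Theory.
Local Open Scope ring_scope.

Section Truncation.
Variables (gT : finGroupType) (G H K : {group gT}) (eta : 'CF(G)).

(* The guard [H \subset G] only serves to
   make the definition total; it holds in all uses. *)
Definition ffun_Trunc :=
  [ffun C : coset_of K =>
     ((#|K|%:R)^-1 * \sum_(z in val C) eta z) *+ ((C \in (H / K)%g) && (H \subset G))].

Fact cfTrunc_subproof : is_class_fun <<(H / K)%g>> ffun_Trunc.
Proof.
rewrite genGid; apply: intro_class_fun => [|C /negPf nC]; last first.
  by rewrite nC.
move=> _ _ /morphimP[x Nx Hx ->] /morphimP[y Ny Hy ->].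
rewrite -morphJ //= ?mem_morphim ?groupJ //=.
case sHG: (H \subset G); last by [].
congr (_ *+ _); congr (_ * _).
rewrite (val_coset (groupJ Nx Ny)) (val_coset Nx).
have ->: K :* x ^ y = (K :* x) :^ y by rewrite conjsMg conjg_set1 (normP Ny).
rewrite /conjugate big_imset /=; last by move=> a b _ _; apply: conjg_inj.
apply: eq_bigr => z _; rewrite cfunJ //; exact: (subsetP sHG).
Qed.

Definition cfTrunc : 'CF((H / K)%g) := Cfun 1 cfTrunc_subproof.

End Truncation.

(* For a complement T of K in H (H = K T), the truncation viewed as a class
   function of T via the isomorphism T ~= H/K, t |-> tK. *)
Definition cfTruncT (gT : finGroupType) (G H K T : {group gT}) (eta : 'CF(G))
  : 'CF(T) := 'Res[T] (cfMod (cfTrunc H K eta)).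

(* Main.v *)
Require Import Defs.
From HB Require Import structures.
From mathcomp Require Import all_boot all_order all_algebra all_fingroup
  all_solvable all_field all_character.
Import GroupScope GRing.Theory Num.Theory.
Local Open Scope ring_scope.

Set Implicit Arguments. Unset Strict Implicit. Unset Printing Implicit Defensive.

Local Open Scope ring_scope.
Lemma sumB (gT : finGroupType) (B U T0 : {group gT}) (defB : U ><| T0 = B) (f : gT -> algC) :
  \sum_(b in B) f b = \sum_(u in U) \sum_(t in T0) f (u * t)%g.
Proof.
have [_ _ defUT _ tiUT] := sdprod_context defB.
rewrite -defUT.
have -> : (U * T0)%g = [set (x * y)%g | x in U, y in T0] by [].
rewrite curry_imset2X big_imset /=; last first.
  move=> [u1 t1] [u2 t2]; rewrite !inE /= => /andP[U1 T1] /andP[U2 T2] E.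
  have E2 : (u2^-1 * u1 = t2 * t1^-1)%g.
    by rewrite -[u1](mulgK t1) E -!mulgA mulKg.
  have : (u2^-1 * u1)%g \in U :&: T0 by rewrite inE {2}E2 !groupM ?groupV.
  rewrite tiUT => /set1gP; move: E2 => -> E1.
  have et : t1 = t2 by apply/esym/eqP; rewrite eq_mulgV1 E1.
  by move: E; rewrite et => /mulIg ->.
rewrite pair_big_dep /=; apply: eq_big => [[u t]|[u t] _] //=.
by rewrite inE.
Qed.



Local Close Scope ring_scope.
Section Main.
Variables (gT : finGroupType) (G B N T0 : {group gT}) (Sg : {set coset_of T0}).
Hypotheses (sBG : B \subset G) (sNG : N \subset G)
    (genG : G :=: <<B :|: N>>)
    (defT0 : T0 :=: B :&: N) (nT0N : T0 <| N)
    (sSW : Sg \subset (N / T0)%g)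
    (invS : forall s, s \in Sg -> #[s]%g = 2%N)
    (genW : <<Sg>>%g = (N / T0)%g)
    (BN_mul : forall s w, s \in Sg -> w \in (N / T0)%g ->
       (val s * B * val w)%g \subset
         ((B * val w * B) :|: (B * val (s * w)%g * B))%g).

Definition BnB (n : gT) : {set gT} := (B :* n * B)%g.

Lemma sT0B : T0 \subset B. Proof. by rewrite defT0 subsetIl. Qed.
Lemma sT0N : T0 \subset N. Proof. by rewrite defT0 subsetIr. Qed.
Lemma nT0 x : x \in N -> x \in 'N(T0).
Proof. by case/andP: nT0N => _ /subsetP; apply. Qed.

Lemma BnBP n y :
  reflect (exists b1, exists b2, [/\ b1 \in B, b2 \in B & y = b1 * n * b2])
          (y \in BnB n).
Proof.
apply: (iffP mulsgP) => [[x b2 /rcosetP[b1 Hb1 ->] Hb2 ->]|[b1 [b2 [H1 H2 ->]]]].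
  by exists b1, b2.
by exists (b1 * n) b2; rewrite ?rcoset_refl // mem_rcoset mulgK.
Qed.

Lemma BnB_self n : n \in BnB n.
Proof. by apply/BnBP; exists 1, 1; rewrite !group1 mul1g mulg1. Qed.

Lemma BnB_sym n y : y \in BnB n -> n \in BnB y.
Proof.
case/BnBP=> b1 [b2 [H1 H2 ->]]; apply/BnBP; exists b1^-1, b2^-1.
by rewrite !groupV !mulgA mulVg mul1g mulgK.
Qed.

Lemma BnB_trans n m y : y \in BnB n -> n \in BnB m -> y \in BnB m.
Proof.
case/BnBP=> b1 [b2 [H1 H2 ->]] /BnBP[c1 [c2 [K1 K2 ->]]]; apply/BnBP.
exists (b1 * c1), (c2 * b2); rewrite !groupM //; split=> //.
by rewrite !mulgA.
Qed.

Lemma BnBM n y b1 b2 : y \in BnB n -> b1 \in B -> b2 \in B ->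
  b1 * y * b2 \in BnB n.
Proof.
move=> Hy H1 H2; apply: (BnB_trans _ Hy); apply/BnBP; exists b1, b2.
by split.
Qed.

Lemma BnBMr n y b : y \in BnB n -> b \in B -> y * b \in BnB n.
Proof. by move=> Hy Hb; rewrite -(mul1g y); apply: BnBM. Qed.

Lemma BT0B x y : y \in (B * (T0 :* x) * B)%g -> y \in BnB x.
Proof.
case/mulsgP=> z b2 /mulsgP[b1 tx H1 /rcosetP[t Ht ->] ->] H2 ->.
apply/BnBP; exists (b1 * t), b2; split=> //; last by rewrite !mulgA.
by rewrite groupM // (subsetP sT0B).
Qed.

Lemma cosetM x y : x \in N -> y \in N ->
  coset T0 (x * y) = coset T0 x * coset T0 y.
Proof. by move=> Nx Ny; rewrite morphM ?nT0. Qed.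

Lemma cosetV x : x \in N -> coset T0 x^-1 = (coset T0 x)^-1.
Proof. by move=> Nx; rewrite morphV ?nT0. Qed.

Lemma vcoset x : x \in 'N(T0) -> val (coset T0 x) = T0 :* x.
Proof. exact: val_coset. Qed.

Lemma BN_el s ns m b : s \in Sg -> ns \in N -> coset T0 ns = s ->
  m \in N -> b \in B -> ns * b * m \in BnB m :|: BnB (ns * m).
Proof.
move=> Ss Nns Ens Nm Bb.
have Wm := mem_quotient T0 Nm.
have := subsetP (BN_mul Ss Wm) (ns * b * m).
rewrite -Ens -cosetM // !vcoset ?nT0 ?groupM //.
case/(_ _)/setUP.
- by rewrite !mem_mulg ?rcoset_refl.
- by move/BT0B=> H; rewrite inE H.
- by move/BT0B=> H; rewrite inE H orbT.
Qed.

Lemma inv_Sg s : s \in Sg -> s^-1 = s.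
Proof.
move=> Ss; have:= expg_order s; rewrite invS // expgS expg1 => /eqP.
by rewrite -eq_invg_mul => /eqP.
Qed.

Lemma cosetN_mem w : w \in (N / T0)%g ->
  exists2 n, n \in N & coset T0 n = w.
Proof. by case/morphimP=> n _ Nn ->; exists n. Qed.

Definition wordk k (w : coset_of T0) :=
  exists2 c : 'I_k -> coset_of T0, forall i, c i \in Sg & w = \prod_i c i.

Lemma word_exists n : n \in N -> exists k, wordk k (coset T0 n).
Proof.
move=> Nn; have: coset T0 n \in <<Sg>> by rewrite genW mem_quotient.
by case/gen_prodgP=> k [c Hc E]; exists k, c.
Qed.

Lemma word_step k n : n \in N -> wordk k.+1 (coset T0 n) ->
  exists s, exists ns, [/\ s \in Sg, ns \in N, coset T0 ns = s &
      wordk k (coset T0 (ns^-1 * n))].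
Proof.
move=> Nn [c Hc]; rewrite big_ord_recl => E.
have [ns Nns Ens] := cosetN_mem (subsetP sSW _ (Hc ord0)).
exists (c ord0), ns; split=> //.
exists (fun i => c (lift ord0 i)) => // .
rewrite cosetM ?groupV // cosetV // Ens E mulKg.
by apply: eq_bigr.
Qed.

Lemma word0 n : wordk 0 (coset T0 n) -> n \in N -> n \in T0.
Proof.
by case=> c _; rewrite big_ord0 => E Nn; apply: coset_idr; rewrite ?nT0.
Qed.

Lemma bruhat_uniq_k k n : n \in N -> wordk k (coset T0 n) ->
  forall n', n' \in N -> n' \in BnB n -> coset T0 n' = coset T0 n.
Proof.
elim: k n => [|k IH] n Nn Wn n' Nn' Hn'.
  have T0n := word0 Wn Nn.
  have Bn' : n' \in T0.
    rewrite defT0 inE Nn' andbT.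
    case/BnBP: Hn' => b1 [b2 [H1 H2 ->]].
    by rewrite !groupM // (subsetP sT0B).
  by rewrite !coset_id.
have [s [ns [Ss Nns Ens Wn1]]] := word_step Nn Wn.
set n1 := ns^-1 * n in Wn1.
have Nn1 : n1 \in N by rewrite groupM ?groupV.
have Es' : coset T0 ns^-1 = s by rewrite cosetV // Ens inv_Sg.
have Nnsi : ns^-1 \in N by rewrite groupV.
have := BnB_sym Hn'; case/BnBP=> b1 [b2 [H1 H2 En]].
have := BN_el Ss Nnsi Es' Nn' H1.
have En1 : n1 = ns^-1 * b1 * n' * b2 by rewrite /n1 En !mulgA.
case/setUP=> Hc.
- have Hn1 : n1 \in BnB n' by rewrite En1; apply: BnBMr.
  have e1 := IH n1 Nn1 Wn1 n' Nn' (BnB_sym Hn1).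
  have e2 := IH n1 Nn1 Wn1 n Nn (BnB_trans (BnB_sym Hn') (BnB_sym Hn1)).
  by rewrite e1 e2.
- have Hn1 : n1 \in BnB (ns^-1 * n') by rewrite En1; apply: BnBMr.
  have e := IH n1 Nn1 Wn1 (ns^-1 * n') (groupM Nnsi Nn') (BnB_sym Hn1).
  move: e; rewrite /n1 !cosetM ?groupV // => /mulgI -> //.
Qed.

Lemma bruhat_uniq n n' : n \in N -> n' \in N -> n' \in BnB n ->
  coset T0 n' = coset T0 n.
Proof.
by move=> Nn Nn' H; have [k Wk] := word_exists Nn; apply: bruhat_uniq_k Wk _ _ H.
Qed.

Lemma NBN_k k n : n \in N -> wordk k (coset T0 n) ->
  forall b m, b \in B -> m \in N -> exists2 m', m' \in N & n * b * m \in BnB m'.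
Proof.
elim: k n => [|k IH] n Nn Wn b m Bb Nm.
  have T0n := word0 Wn Nn.
  exists m => //; apply/BnBP; exists (n * b), 1.
  by split; rewrite ?mulg1 ?group1 // groupM // (subsetP sT0B).
have [s [ns [Ss Nns Ens Wn1]]] := word_step Nn Wn.
have Nn1 : ns^-1 * n \in N by rewrite groupM ?groupV.
have [m1 Nm1 /BnBP[b1 [b2 [H1 H2 E]]]] := IH _ Nn1 Wn1 b m Bb Nm.
have: n * b * m = ns * b1 * m1 * b2.
  by move: E; rewrite -!mulgA => E; rewrite -[n * _](mulKVg ns) E.
move=> ->; case/setUP: (BN_el Ss Nns Ens Nm1 H1) => Hc.
  by exists m1 => //; apply: BnBMr.
by exists (ns * m1); rewrite ?groupM //; apply: BnBMr.
Qed.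

Lemma bruhat_exists y : y \in G -> exists2 n, n \in N & y \in BnB n.
Proof.
rewrite genG => /gen_prodgP[k [c Hc ->]].
elim: k c Hc => [|k IH] c Hc.
  by exists 1; rewrite ?group1 // big_ord0 BnB_self.
rewrite big_ord_recl.
have [m Nm /BnBP[b1 [b2 [H1 H2 E]]]] := IH _ (fun i => Hc (lift ord0 i)).
rewrite E; case/setUP: (Hc ord0) => Hc0.
  by exists m => //; rewrite !mulgA; apply: BnBM; rewrite ?BnB_self ?groupM.
have [k' Wk] := word_exists Hc0.
have [m' Nm' Hm'] := NBN_k Hc0 Wk H1 Nm.
by exists m' => //; rewrite !mulgA; apply: BnBMr.
Qed.

Lemma BnB_subG n : n \in N -> BnB n \subset G.
Proof.
move=> Nn; apply/subsetP=> y /BnBP[b1 [b2 [H1 H2 ->]]].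
by rewrite !groupM ?(subsetP sBG b1) ?(subsetP sBG b2) ?(subsetP sNG n).
Qed.

Lemma card_cells y : y \in G -> #|[set n in N | y \in BnB n]| = #|T0|.
Proof.
case/bruhat_exists=> n0 Nn0 Hy.
rewrite -(card_rcoset T0 n0); apply: eq_card => n; rewrite !inE.
apply/andP/rcosetP => [[Nn Hn]|[t Ht ->]].
  have E := bruhat_uniq Nn0 Nn (BnB_trans (BnB_sym Hn) Hy).
  exists (n * n0^-1); last by rewrite mulgKV.
  apply: coset_idr; first by rewrite nT0 ?groupM ?groupV.
  by rewrite cosetM ?groupV // cosetV // E mulgV.
have Nt := subsetP sT0N t Ht.
split; first by rewrite groupM.
apply: BnB_trans Hy _; apply/BnBP; exists t^-1, 1.
by rewrite mulg1 mulgA mulVg mul1g group1 groupV (subsetP sT0B).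
Qed.



Local Open Scope ring_scope.

Variables (p : nat) (U : {group gT}).
Hypotheses (defB : U ><| T0 = B) (sylU : U \in 'Syl_p(G)).

Let tl := cfSdprod defB.

Lemma UB : U \subset B.
Proof. by have [/andP[]] := sdprod_context defB. Qed.
Lemma nUB : U <| B.
Proof. by have [] := sdprod_context defB. Qed.
Lemma hallU : p.-Hall(B) U.
Proof. by apply: pHall_subl UB sBG _; move: sylU; rewrite inE. Qed.

Lemma U_pelt u y : u \in U -> (u ^ y)%g \in B -> (u ^ y)%g \in U.
Proof.
move=> Uu Bu; rewrite (mem_normal_Hall hallU nUB) // p_eltJ.
exact: mem_p_elt (pHall_pgroup hallU) Uu.
Qed.

Lemma tlE a u t : u \in U -> t \in T0 -> tl a (u * t)%g = a t.
Proof. by move=> Uu Tt; rewrite /tl cfSdprodE. Qed.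

Definition gfun (a b : 'CF(T0)) (y : gT) :=
  \sum_(x in B) tl a x * (tl b (x ^ y)%g)^*.

Lemma gfun_n a b n : n \in N ->
  gfun a b n = (#|U :&: B :^ n^-1|%:R * #|T0|%:R) * '[a, (b ^ (n^-1)%g)%CF].
Proof.
move=> Nn; have nn := nT0 Nn; have nni : (n^-1)%g \in 'N(T0) by rewrite groupV.
rewrite /gfun (sumB defB).
transitivity (\sum_(u in U) (if u \in B :^ n^-1 then
     \sum_(t in T0) a t * ((b ^ (n^-1)%g)%CF t)^* else 0)).
  apply: eq_bigr => u Uu; case: ifP => Hu.
    apply: eq_bigr => t Tt; rewrite tlE // conjMg.
    have Un : (u ^ n)%g \in U by apply: U_pelt; rewrite // -mem_conjgV.
    by rewrite (tlE _ Un) ?memJ_norm // (cfConjgE _ _ nni) invgK.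
  rewrite big1 // => t Tt; rewrite conjMg [tl b _]cfun0 ?conjC0 ?mulr0 //.
  apply/negP => Hb; move/negbT: Hu; rewrite mem_conjgV => /negP; apply.
  rewrite -(mulgK (t ^ n)%g (u ^ n)%g) groupM // groupV (subsetP sT0B) //.
  by rewrite memJ_norm.
rewrite -big_mkcondr /= sumr_const.
have -> : #|[pred u in U | u \in B :^ n^-1]| = #|U :&: B :^ n^-1|.
  by apply: eq_card => u; rewrite !inE.
by rewrite cfdotE mulrA mulfK ?neq0CG // mulr_natl.
Qed.

Lemma gfun_binv a b n b1 b2 : b1 \in B -> b2 \in B ->
  gfun a b (b1 * n * b2)%g = gfun a b n.
Proof.
move=> H1 H2; rewrite /gfun (reindex_astabs 'J b1^-1%g) ?astabsJ; last first.
  by rewrite groupV (subsetP (normG B)).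
apply: eq_bigr => x Bx /=.
rewrite [tl a _]cfunJ ?groupV // -conjgM.
have -> : (b1^-1 * (b1 * n * b2) = n * b2)%g by rewrite -!mulgA mulKg.
by rewrite conjgM (cfunJ _ _ H2).
Qed.

Lemma eBnB n : n \in N -> BnB n = (U * (B :^ n^-1)) :* n.
Proof.
move=> Nn; have nn := nT0 Nn.
have [_ _ defUT _ _] := sdprod_context defB.
apply/setP => x; apply/idP/idP.
  case/BnBP=> b1 [b2 [H1 H2 ->]].
  have H1' : b1 \in (U * T0)%g by rewrite defUT.
  case/mulsgP: H1' => u t Uu Tt Eb; rewrite Eb.
  apply/rcosetP; exists (u * (t * n * b2 * n^-1))%g; last first.
    by rewrite -!mulgA mulVg mulg1.
  have E : ((t * n * b2 * n^-1) ^ n = t ^ n * b2)%g.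
    by rewrite !conjgE !mulgA mulgKV.
  rewrite mem_mulg // mem_conjgV E.
  by rewrite groupM // (subsetP sT0B) // memJ_norm.
case/rcosetP=> y /mulsgP[u c Uu Bc ->] ->.
apply/BnBP; exists u, (c ^ n)%g; split; rewrite -?mem_conjgV ?(subsetP UB) //.
by rewrite conjgE !mulgA mulgK.
Qed.

Lemma card_BnB n : n \in N ->
  (#|BnB n| * #|U :&: B :^ n^-1| = #|U| * #|B|)%N.
Proof.
move=> Nn; rewrite eBnB // card_rcoset.
by rewrite -(mul_cardG U (B :^ n^-1)%G) cardJg.
Qed.

Lemma sum_gfun_cells a b : \sum_(y in G) gfun a b y =
  #|T0|%:R^-1 * \sum_(n in N) (#|BnB n|%:R * gfun a b n).
Proof.
transitivity (\sum_(y in G) #|T0|%:R^-1 * \sum_(n in N | y \in BnB n) gfun a b y).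
  apply: eq_bigr => y Gy.
  have -> : \sum_(n in N | y \in BnB n) gfun a b y =
            gfun a b y *+ #|[set n in N | y \in BnB n]|.
    by rewrite -sumr_const; apply: eq_bigl => n; rewrite inE.
  by rewrite card_cells // -(mulr_natl (gfun a b y)) mulKf ?neq0CG.
rewrite -mulr_sumr; congr (_ * _).
rewrite (exchange_big_dep (fun n => n \in N)) /=; last by move=> y n _ /andP[].
apply: eq_bigr => n Nn.
transitivity (\sum_(y in BnB n) gfun a b n); last by rewrite sumr_const mulr_natl.
apply: eq_big => [y|y].
  rewrite Nn /=; apply/andP/idP => [[]//|Hy]; split=> //.
  exact: (subsetP (BnB_subG Nn)).
by case/andP=> _ /andP[_ /BnBP[b1 [b2 [H1 H2 ->]]]]; apply: gfun_binv.
Qed.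

Lemma F_formula a b : '['Ind[G] (tl a), 'Ind[G] (tl b)] =
  #|T0|%:R^-1 * \sum_(n in N) '[a, (b ^ (n^-1)%g)%CF].
Proof.
rewrite -Frobenius_reciprocity cfdotE.
have E1 : \sum_(x in B) tl a x * ('Res[B] ('Ind[G] (tl b)) x)^* =
          #|B|%:R^-1 * \sum_(y in G) gfun a b y.
  transitivity (\sum_(x in B) #|B|%:R^-1 *
                 \sum_(y in G) tl a x * (tl b (x ^ y)%g)^*).
    apply: eq_bigr => x Bx; rewrite cfResE // cfIndE // rmorphM /= fmorphV.
    by rewrite rmorph_nat rmorph_sum mulrCA mulr_sumr.
  by rewrite -mulr_sumr exchange_big.
rewrite E1 sum_gfun_cells.
have E2 : forall n, n \in N ->
    #|BnB n|%:R * gfun a b n = (#|B|%:R * #|B|%:R) * '[a, (b ^ (n^-1)%g)%CF].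
  move=> n Nn; rewrite gfun_n // mulrA; congr (_ * _).
  rewrite -!natrM; congr _%:R.
  by rewrite mulnA card_BnB // mulnAC (sdprod_card defB).
rewrite (eq_bigr _ E2) -mulr_sumr.
have B0 : (#|B|%:R : algC) != 0 by rewrite neq0CG.
set S := \sum_(n in N) _; set t := #|T0|%:R; set c := #|B|%:R.
rewrite [c^-1 * (t^-1 * _)]mulrCA [c^-1 * (t^-1 * _)]mulrCA; congr (_ * _).
by rewrite -mulrA !mulKf.
Qed.

Lemma KL (psi : 'CF(T0)) m : m \in N ->
  'Ind[G] (tl (psi ^ m)%CF) = 'Ind[G] (tl psi).
Proof.
move=> Nm.
set X := 'Ind[G] (tl psi); set Y := 'Ind[G] (tl (psi ^ m)%CF).
have cM y z : y \in N -> z \in N -> (psi ^ (y * z)%g)%CF = ((psi ^ y) ^ z)%CF.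
  by move=> Ny Nz; exact: (cfConjgM psi nT0N Ny Nz).
have FXY : '[X, Y] = '[X].
  rewrite /X /Y !F_formula; congr (_ * _).
  rewrite (reindex_astabs 'R m) ?astabsR //=.
  apply: eq_bigr => n Nn; rewrite -cM ?groupV ?groupM //.
  by rewrite invMg mulKVg.
have FYY : '[Y] = '[X].
  rewrite /X /Y !F_formula; congr (_ * _).
  rewrite (reindex_astabs 'J m) ?astabsJ ?(subsetP (normG N)) //=.
  apply: eq_bigr => n Nn; have Nnm : (n ^ m)%g \in N by rewrite groupJ.
  rewrite -cM ?groupV //.
  have -> : (m * (n ^ m)^-1 = n^-1 * m)%g.
    by rewrite conjgE !invMg invgK !mulgA mulgV mul1g.
  by rewrite cM ?groupV ?groupM // cfConjg_iso.
apply/eqP; rewrite -subr_eq0 -cfnorm_eq0 cfdotBl !cfdotBr (cfdotC Y X) FXY FYY.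
by rewrite (geC0_conj (cfnorm_ge0 X)) !subrr.
Qed.

Lemma truncE (chi : 'CF(G)) b : b \in B ->
  (cfTrunc B U chi %% U)%CF b = #|U|%:R^-1 * \sum_(u in U) chi (b * u)%g.
Proof.
move=> Bb; rewrite cfModE ?nUB //.
rewrite /cfTrunc /ffun_Trunc cfunElock mem_quotient // sBG /= mulr1n.
have nUb : b \in 'N(U) by rewrite (subsetP (normal_norm nUB)).
congr (_ * _); rewrite val_coset // norm_rlcoset // -lcosetE /lcoset big_imset //.
by move=> x y _ _ /mulgI.
Qed.

Lemma trunc_dot (chi : 'CF(G)) (psi : 'CF(T0)) :
  '[cfTruncT B U T0 chi, psi] = '[chi, 'Ind[G] (tl psi)].
Proof.
set tau := (cfTrunc B U chi %% U)%CF.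
have kU : U \subset cfker tau by apply: cfker_mod nUB.
have -> : cfTruncT B U T0 chi = 'Res[T0] tau by [].
rewrite -(cfSdprod_iso defB) (cfRes_sdprodK defB kU) -cfdot_Res_l.
rewrite !cfdotE; congr (_ * _).
rewrite (eq_bigr (fun b => #|U|%:R^-1 *
            \sum_(u in U) chi (b * u)%g * (tl psi b)^*)); last first.
  by move=> b Bb; rewrite truncE // -mulrA mulr_suml.
rewrite -mulr_sumr exchange_big /=.
rewrite (eq_bigr (fun _ => \sum_(b in B) 'Res[B] chi b * (tl psi b)^*)).
  by rewrite sumr_const -(mulr_natl (\sum_(b in B) _)) mulKf ?neq0CG.
move=> u Uu; have Bu := subsetP UB u Uu.
rewrite (reindex_astabs 'R u^-1%g) ?astabsR ?groupV //=.
apply: eq_bigr => b Bb; rewrite mulgKV cfResE //.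
by rewrite (cfkerMr _ (subsetP (cfker_sdprod defB psi) _ _)) ?groupV.
Qed.

Lemma nat_ge1 (x : algC) : x \is a Num.nat -> x != 0 -> 1 <= x.
Proof. by case/natrP=> n ->; rewrite pnatr_eq0 ler1n lt0n. Qed.



Section Chi.
Variable chi : 'CF(G).
Hypothesis Nchi : chi \is a character.
Hypothesis chi_p0 : forall u, u \in G -> p.-elt u -> u != 1%g -> chi u = 0.

Let trT := cfTruncT B U T0 chi.

Lemma trunc1 : trT 1%g = chi 1%g / #|U|%:R.
Proof.
rewrite /trT /cfTruncT cfResE ?group1 ?sT0B // truncE ?group1 //.
rewrite (bigD1 1%g) ?group1 //= big1 ?addr0 ?mul1g; first by rewrite mulrC.
move=> u /andP[Uu nu]; rewrite mul1g chi_p0 //.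
  by rewrite (subsetP sBG) // (subsetP UB).
exact: mem_p_elt (pHall_pgroup hallU) Uu.
Qed.

Lemma trunc_conj psi n : n \in N -> '[trT, (psi ^ n)%CF] = '[trT, psi].
Proof. by move=> Nn; rewrite /trT !trunc_dot KL. Qed.

Lemma trunc_inv n : n \in N -> (trT ^ n)%CF = trT.
Proof.
move=> Nn; apply/eqP; rewrite -subr_eq0 -cfnorm_eq0.
have H psi : '[(trT ^ n)%CF, psi] = '[trT, psi].
  rewrite -{1}(cfConjgKV n psi) cfConjg_iso trunc_conj //.
  by rewrite groupV.
by rewrite cfdotBl !H subrr.
Qed.

Lemma trunc_nat j : '[trT, 'chi_j] \is a Num.nat.
Proof.
rewrite /trT trunc_dot Cnat_cfdot_char // cfInd_char //.
by rewrite /tl cfSdprod_char irr_char.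
Qed.


Lemma trunc_char : trT \is a character.
Proof.
apply/char_sum_irrP; exists (fun j => Num.truncn '[trT, 'chi_j]).
rewrite {1}[trT]cfun_sum_cfdot; apply: eq_bigr => j _.
by rewrite truncnK // trunc_nat.
Qed.

Variable i : Iirr T0.
Hypothesis Ci : i \in irr_constt trT.

Lemma orbit_bound :
  #|[set conjg_Iirr i n | n in N]|%:R <= chi 1%g / #|U|%:R.
Proof.
rewrite -trunc1; set O := [set conjg_Iirr i n | n in N].
rewrite {1}[trT]cfun_sum_cfdot sum_cfunE (bigID (mem O)) /=.
rewrite -[#|O|%:R]addr0 lerD //; last first.
  apply: sumr_ge0 => j _; rewrite cfunE mulr_ge0 ?char1_ge0 ?irr_char //.
  exact: natr_ge0 (trunc_nat j).
have -> : (#|O|%:R : algC) = \sum_(j | true && (j \in O)) 1.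
  by rewrite sumr_const.
apply: ler_sum => j /= /imsetP[n Nn ->]; rewrite cfunE.
rewrite -[1]mul1r ler_pM ?ler01 //.
  apply: nat_ge1; first exact: trunc_nat.
  by rewrite conjg_IirrE trunc_conj // -irr_consttE.
by apply: nat_ge1; [exact: Cnat_irr1 | exact: irr1_neq0].
Qed.

Lemma part2 : chi 1%g = #|U|%:R ->
  cfTrunc B U chi \in irr (B / U)%g.
Proof.
move=> c1; have t1 : trT 1%g = 1 by rewrite trunc1 c1 mulfV ?neq0CG.
have lin : trT \is a linear_char by rewrite qualifE /= trunc_char t1 eqxx.
rewrite -cfMod_irr ?nUB //.
have kU : U \subset cfker (cfTrunc B U chi %% U)%CF by apply: cfker_mod nUB.
rewrite -(cfRes_sdprodK defB kU) cfSdprod_irr.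
exact: lin_char_irr.
Qed.

End Chi.
End Main.

Unset Implicit Arguments.
Local Open Scope ring_scope.

Theorem proposition4p5 (gT : finGroupType) (p : nat)
    (G B N U T0 : {group gT}) (Sg : {set coset_of T0})
    (* p is the defining characteristic *)
    (p_pr : prime p)
    (* (B, N) is a BN-pair (Tits system) of G with Weyl group W0 = N/T0 *)
    (sBG : B \subset G) (sNG : N \subset G)
    (genG : G :=: <<B :|: N>>)
    (defT0 : T0 :=: B :&: N) (nT0N : T0 <| N)
    (sSW : Sg \subset (N / T0)%g)
    (invS : forall s, s \in Sg -> #[s]%g = 2%N)
    (genW : <<Sg>>%g = (N / T0)%g)
    (BN_mul : forall s w, s \in Sg -> w \in (N / T0)%g ->
       (val s * B * val w)%g \subset
         ((B * val w * B) :|: (B * val (s * w)%g * B))%g)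
    (BN_ns : forall s, s \in Sg -> (val s * B * val s)%g != B)
    (* the BN-pair is split of characteristic p *)
    (defB : U ><| T0 = B) (defU : U :=: 'O_p(B)) (sylU : U \in 'Syl_p(G))
    (capBN : \bigcap_(n in N) (B :^ n) = T0) (abT0 : abelian T0)
    (* chi is a character vanishing on non-trivial p-elements *)
    (chi : 'CF(G)) (Nchi : chi \is a character)
    (chi_p0 : forall u, u \in G -> p.-elt u -> u != 1%g -> chi u = 0)
    (* beta = 'chi_i is an irreducible constituent of the truncation *)
    (i : Iirr T0) (Ci : i \in irr_constt (cfTruncT B U T0 chi)) :
  (#|[set conjg_Iirr i n | n in N]|%:R <= chi 1%g / (#|G|`_p)%:R)
  /\ (chi 1%g = (#|G|`_p)%:R ->
        cfTrunc B U chi \in irr (B / U)%g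
        /\ (forall n, n \in N -> (cfTruncT B U T0 chi ^ n)%CF = cfTruncT B U T0 chi)).
Proof.
have cU : #|U| = (#|G|`_p)%N by apply: card_Hall; move: sylU; rewrite inE.
split.
  rewrite -cU.
  exact: (orbit_bound sBG sNG genG defT0 nT0N sSW invS genW BN_mul defB sylU Nchi chi_p0 Ci).
move=> c1; split.
  by apply: (part2 sBG defT0 defB sylU Nchi chi_p0); rewrite cU.
move=> n Nn.
exact: (trunc_inv sBG sNG genG defT0 nT0N sSW invS genW BN_mul defB sylU chi Nn).
Qed.
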